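(* Let $k$ be a positive integer. Every tournament with $n$ vertices and cutwidth at most $k$ has at most $A\cdot\exp\bigl(2C\sqrt{k(1+\ln 2k)}\bigr)\cdot(n+1)$ $k$-cuts, where $C=\pi\sqrt{2/3}$ and $A$ is a constant such that $p(m)\le\frac{A}{m+1}\exp(C\sqrt{m})$ for all integers $m\ge 0$.
   Context: A tournament is a simple digraph in which for every pair of distinct vertices $v,w$ exactly one of $(v,w),(w,v)$ is an arc. The width of an ordering $(v_1,\dots,v_n)$ of $V(T)$ is $\max_{1\le t\le n-1}|E(\{v_{t+1},\dots,v_n\},\{v_1,\dots,v_t\})|$, where $E(A,B)$ is the set of arcs with tail in $A$ and head in $B$; the cutwidth of $T$ is the minimum width over all orderings. A $k$-cut of a digraph $T$ is an ordered partition $(X,Y)$ of $V(T)$ (either part may be empty) such that there are at most $k$ arcs $(u,v)\in E(T)$ with $u\in Y$ and $v\in X$. $p(m)$ denotes the number of partitions of the integer $m$; such $A$ exists by the Hardy–Ramanujan estimate. *)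

(* Defs.v *)
From mathcomp Require Import all_boot all_fingroup.
From Stdlib Require Import Reals.
Set Implicit Arguments. Unset Strict Implicit. Unset Printing Implicit Defensive.

Definition tournament (n : nat) (E : rel 'I_n) : Prop :=
  (forall v, ~~ E v v) /\ (forall u v, u != v -> (E u v (+) E v u) = true).

(* An ordering (v_1,...,v_n) is a permutation s, with v_{i+1} = s i.
   Number of arcs from {v_{t+1},...,v_n} to {v_1,...,v_t}. *)
Definition cut_size (n : nat) (E : rel 'I_n) (s : {perm 'I_n}) (t : nat) : nat :=
  #|[set p : 'I_n * 'I_n | (t <= p.1) && (p.2 < t) && E (s p.1) (s p.2)]|.

Definition width (n : nat) (E : rel 'I_n) (s : {perm 'I_n}) : nat :=
  \max_(t < n | 0 < t) cut_size E s t.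

(* cutwidth: minimum width over all orderings (n*n bounds every width). *)
Definition cutwidth (n : nat) (E : rel 'I_n) : nat :=
  \big[minn/n * n]_(s : {perm 'I_n}) width E s.

Definition back_arcs (n : nat) (E : rel 'I_n) (X : {set 'I_n}) : nat :=
  #|[set p : 'I_n * 'I_n | (p.1 \notin X) && (p.2 \in X) && E p.1 p.2]|.

Definition num_kcuts (n : nat) (E : rel 'I_n) (k : nat) : nat :=
  #|[set X : {set 'I_n} | back_arcs E X <= k]|.

(* partition number p(m): a partition of m is encoded by its multiplicity
   function f, where f i = number of parts equal to i+1 (parts are in 1..m,
   multiplicities are in 0..m), subject to sum_i (i+1) * f i = m. *)
Definition partition_number (m : nat) : nat :=
  #|[set f : {ffun 'I_m -> 'I_m.+1} | \sum_(i < m) i.+1 * f i == m]|.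

Definition Cconst : R := (PI * sqrt (2 / 3))%R.

(* Main.v *)
Require Import Defs.
From mathcomp Require Import all_boot all_fingroup.
From Stdlib Require Import Reals.
From mathcomp Require Import zify.
From Stdlib Require Import Lra Lia.
From mathcomp Require Import ssrnat.
Set Implicit Arguments. Unset Strict Implicit. Unset Printing Implicit Defensive.

Section Cut.
Variables (n : nat) (E : rel 'I_n).

Lemma cut_size_le (s : {perm 'I_n}) t : cut_size E s t <= n * n.
Proof.
by rewrite /cut_size (leq_trans (max_card _)) // card_prod card_ord.
Qed.

Lemma width_le (s : {perm 'I_n}) : width E s <= n * n.
Proof. by apply/bigmax_leqP => t _; apply: cut_size_le. Qed.

Lemma exists_perm k : cutwidth E <= k ->
  exists s : {perm 'I_n}, forall t, 0 < t -> t < n -> cut_size E s t <= k.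
Proof.
move=> hk.
have [s hs] : exists s : {perm 'I_n}, width E s <= cutwidth E.
  rewrite /cutwidth; apply: (big_ind (fun x => exists s : {perm 'I_n}, width E s <= x)).
  - by exists 1%g; apply: width_le.
  - move=> x y [s1 h1] [s2 h2]; rewrite /minn; case: ltnP => h; [exists s1|exists s2]; lia.
  - by move=> s _; exists s.
exists s => t t0 tn.
apply: leq_trans hk; apply: leq_trans hs.
by apply: (@leq_bigmax_cond _ _ (fun t : 'I_n => cut_size E s t) (Ordinal tn)).
Qed.

End Cut.

Definition Zc n (Q : {set 'I_n}) (c : nat) := #|[set i : 'I_n | (i < c) && (i \notin Q)]|.
Definition Oc n (Q : {set 'I_n}) (c : nat) := #|[set i : 'I_n | (c <= i) && (i \in Q)]|.
Definition good n (K : nat) (Q : {set 'I_n}) := [forall c : 'I_n, Zc Q c * Oc Q c <= K].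
Definition inv n (Q : {set 'I_n}) := \sum_(q in Q) Zc Q q.


Section CutLemma.
Variables (n : nat) (E : rel 'I_n) (k : nat) (s : {perm 'I_n}).
Hypothesis hT : tournament E.
Hypothesis hs : forall t, 0 < t -> t < n -> cut_size E s t <= k.

Lemma cut_lemma (X : {set 'I_n}) : back_arcs E X <= k ->
  good (k + k) [set i | s i \in X].
Proof.
move=> hX; apply/forallP => c; set Q := [set i | s i \in X].
set L := [set i : 'I_n | (i < c) && (i \notin Q)].
set R := [set i : 'I_n | (c <= i) && (i \in Q)].
rewrite /Zc /Oc -/L -/R -cardsX.
set P := setX L R.
rewrite -(cardsID [set p : 'I_n * 'I_n | E (s p.1) (s p.2)] P).
apply: leq_add.
- apply: leq_trans hX.
  have inj : injective (fun p : 'I_n * 'I_n => (s p.1, s p.2)).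
    by move=> [a b] [a' b'] /= [/perm_inj -> /perm_inj ->].
  rewrite -(card_imset _ inj); apply: subset_leq_card.
  apply/subsetP => q /imsetP [[a b] /setIP [] /setXP [] /= ].
  move=> ha hb he ->; move: ha hb he; rewrite /L /R /Q !inE => /andP [_ ha] /andP [_ hb] he.
  by move: he; rewrite /= ha hb.
- have [c0|cpos] := posnP c.
    suff -> : P :\: [set p | E (s p.1) (s p.2)] = set0 by rewrite cards0.
    by apply/setP => -[a b]; rewrite /P /L !inE c0 ltn0 /= andbF.
  have [cn|ncn] := leqP n c.
    suff -> : P :\: [set p | E (s p.1) (s p.2)] = set0 by rewrite cards0.
    apply/setP => -[a b]; rewrite /P /R !inE /=.
    have -> : (c <= b) = false by apply/negbTE; rewrite -ltnNge (leq_trans (ltn_ord b) cn).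
    by rewrite /= !andbF.
  apply: leq_trans (hs cpos ncn).
  have inj : injective (fun p : 'I_n * 'I_n => (p.2, p.1)).
    by move=> [a b] [a' b'] /= [-> ->].
  rewrite -(card_imset _ inj); apply: subset_leq_card.
  apply/subsetP => q /imsetP [[a b] /setDP [] /setXP [] /= ].
  move=> ha hb he ->; move: ha hb he; rewrite /L /R /Q !inE => /andP [ha _] /andP [hb _] he.
  rewrite /= hb ha /=.
  have neq : s a != s b.
    apply/eqP => /perm_inj eab; move: ha hb; rewrite eab; lia.
  by case: hT => _ /(_ _ _ neq); rewrite (negbTE he).
Qed.
End CutLemma.

Lemma sum_lt n a : \sum_(v < n) (v < a) = minn a n.
Proof.
elim: n => [|n IH]; first by rewrite big_ord0; lia.
by rewrite big_ord_recr /= IH; case: ltnP => h; lia.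
Qed.

Lemma card_lt n a : #|[set v : 'I_n | v < a]| = minn a n.
Proof.
rewrite -sum_lt -sum1_card big_mkcond /=.
by apply: eq_bigr => i _; rewrite inE; case: (i < a).
Qed.

Section Inv.
Variable n : nat.
Implicit Types Q : {set 'I_n}.

Lemma Zc_le Q c : Zc Q c <= n.
Proof. by rewrite /Zc (leq_trans (max_card _)) // card_ord. Qed.

Lemma inv_bound K Q : good K Q -> inv Q <= \sum_(v < n) K %/ v.+1.
Proof.
move=> hg.
have -> : inv Q = \sum_(q in Q) \sum_(v < n) (v < Zc Q q).
  by apply: eq_bigr => q _; rewrite sum_lt; apply/esym/minn_idPl/Zc_le.
rewrite exchange_big /=; apply: leq_sum => v _.
set T := [set q in Q | v < Zc Q q].
have -> : \sum_(q in Q) (v < Zc Q q) = #|T|.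
  rewrite -sum1_card big_mkcond [in RHS]big_mkcond /=; apply: eq_bigr => q _.
  by rewrite !inE; case: (q \in Q); case: (v < Zc Q q).
have [T0|[q1 hq1]] := set_0Vmem T; first by rewrite T0 cards0.
case: (arg_minnP (fun q : 'I_n => nat_of_ord q) hq1) => q0 hq0 hmin.
have : q0 \in T := hq0. rewrite /T inE => /andP [q0Q vZ].
rewrite leq_divRL //; apply: leq_trans (forallP hg q0).
rewrite mulnC; apply: leq_mul => //.
rewrite /Oc; apply: subset_leq_card; apply/subsetP => q hq.
move: (hmin q hq) (hq); rewrite !inE => -> /andP [-> _] //.
Qed.

Lemma sum_div_le K : \sum_(v < n) K %/ v.+1 <= \sum_(v < K) K %/ v.+1.
Proof.
rewrite -(big_mkord xpredT (fun v => K %/ v.+1)) -(big_mkord xpredT (fun v => K %/ v.+1)).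
have [nK|Kn] := leqP n K.
  by rewrite (@big_cat_nat _ _ _ n 0 K _ _ (leq0n n) nK) /= leq_addr.
rewrite (@big_cat_nat _ _ _ K 0 n _ _ (leq0n K) (ltnW Kn)) /=.
rewrite [X in _ + X](_ : _ = 0) ?addn0 //.
rewrite big_nat_cond big1 // => v /andP [/andP [hv _] _].
by rewrite divn_small // ltnS.
Qed.

End Inv.

Section Enc.
Variable n : nat.
Implicit Types Q : {set 'I_n}.

Definition cnt Q j := #|[set q in Q | Zc Q q == j]|.
Definition Gf Q v := #|[set q in Q | v < Zc Q q]|.

Lemma Zc_le_inv Q q : q \in Q -> Zc Q q <= inv Q.
Proof. by move=> hq; rewrite /inv (bigD1 q) //= leq_addr. Qed.

Lemma part_sum Q m (P : pred nat) (F : nat -> nat) : inv Q = m ->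
  \sum_(q in Q | P (Zc Q q)) F (Zc Q q) = \sum_(j < m.+1 | P j) F j * cnt Q j.
Proof.
move=> hm.
have hle q : q \in Q -> Zc Q q < m.+1 by move=> hq; rewrite ltnS -hm Zc_le_inv.
rewrite (partition_big (fun q : 'I_n => inord (Zc Q q) : 'I_m.+1) (fun j : 'I_m.+1 => P j)) /=; last first.
  by move=> q /andP [hq hp]; rewrite inordK ?hle.
apply: eq_bigr => j hj.
rewrite (eq_bigr (fun _ => F j)); last first.
  by move=> q /andP [/andP [hq _] /eqP <-]; rewrite inordK ?hle.
rewrite (eq_bigl (mem [set q in Q | Zc Q q == j])); last first.
  move=> q; rewrite /= !inE; case hq: (q \in Q) => //=.
  apply/andP/eqP => [[_ /eqP <-]|hz]; first by rewrite inordK ?hle.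
  split; first by rewrite hz.
  by apply/eqP/val_inj; rewrite /= inordK ?hle // hz.
by rewrite sum_nat_const mulnC.
Qed.

Lemma inv_cnt Q m : inv Q = m -> m = \sum_(j < m.+1) j * cnt Q j.
Proof.
move=> hm; rewrite -(part_sum xpredT (fun x : nat => x) hm); rewrite -{1}hm /inv.
by apply: eq_bigl => q /=; rewrite andbT.
Qed.

Lemma G_cnt Q m v : inv Q = m -> Gf Q v = \sum_(j < m.+1 | v < j) cnt Q j.
Proof.
move=> hm; rewrite (eq_bigr (fun j : 'I_m.+1 => 1 * cnt Q j)); last by move=> j _; rewrite mul1n.
rewrite -(part_sum (fun j => v < j) (fun _ => 1) hm) sum1_card /Gf.
by apply: eq_card => q; rewrite !inE.
Qed.

Definition enc m Q : {ffun 'I_m -> 'I_m.+1} := [ffun i : 'I_m => inord (cnt Q i.+1)].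

Lemma cnt_le Q m (i : 'I_m) : inv Q = m -> cnt Q i.+1 <= m.
Proof.
move=> hm; rewrite {2}(inv_cnt hm) (bigD1 (inord i.+1)) //= inordK ?ltnS //.
by apply: leq_trans (leq_addr _ _); apply: leq_pmull.
Qed.

Lemma enc_val Q m (i : 'I_m) : inv Q = m -> (enc m Q i : nat) = cnt Q i.+1.
Proof. by move=> hm; rewrite ffunE inordK // ltnS cnt_le. Qed.

Lemma enc_part Q m : inv Q = m ->
  enc m Q \in [set f : {ffun 'I_m -> 'I_m.+1} | \sum_(i < m) i.+1 * f i == m].
Proof.
move=> hm; rewrite inE; apply/eqP.
transitivity (\sum_(j < m.+1) j * cnt Q j); last by rewrite -inv_cnt.
rewrite big_ord_recl /= mul0n add0n.
by apply: eq_bigr => i _; rewrite enc_val // lift0.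
Qed.

End Enc.

Section Zeros.
Variable n : nat.
Implicit Types Q : {set 'I_n}.

Lemma Z_mono Q a b : a <= b -> Zc Q a <= Zc Q b.
Proof.
move=> hab; apply: subset_leq_card; apply/subsetP => i; rewrite !inE.
by case/andP => h ->; rewrite (leq_trans h hab).
Qed.

Lemma Z_strict Q (x q : 'I_n) : x \notin Q -> x < q -> Zc Q x < Zc Q q.
Proof.
move=> hx hxq; apply: proper_card; apply/properP; split.
  apply/subsetP => i; rewrite !inE; case/andP => h ->.
  by rewrite (ltn_trans h hxq).
by exists x; rewrite !inE ?hxq ?hx ?ltnn.
Qed.

Lemma zero_eq Q (x : 'I_n) : x \notin Q -> x + Gf Q (Zc Q x) = Zc Q x + #|Q|.
Proof.
move=> hx.
have eG : Gf Q (Zc Q x) = #|[set q in Q | x < q]|.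
  apply: eq_card => q; rewrite !inE; case hq: (q \in Q) => //=.
  apply/idP/idP => h; last by apply: Z_strict.
  rewrite ltnNge; apply/negP => hqx; move: (Z_mono Q hqx); rewrite leqNgt h //.
have h1 : #|[set v : 'I_n | v < x]| = x by rewrite card_lt; apply/minn_idPl/ltnW.
have h1' := cardsID Q [set v : 'I_n | v < x].
have e1 : [set v : 'I_n | v < x] :\: Q = [set i : 'I_n | (i < x) && (i \notin Q)].
  by apply/setP => i; rewrite !inE andbC.
have h2 := cardsID [set v : 'I_n | v < x] Q.
have e2 : Q :\: [set v : 'I_n | v < x] = [set q in Q | x < q].
  apply/setP => q; rewrite !inE andbC; case hq: (q \in Q) => //=.
  rewrite -leqNgt leq_eqVlt; case: eqP => //= eqx.
  by move: hx; rewrite (_ : x = q) ?hq //; apply/val_inj.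
have e3 : [set v : 'I_n | v < x] :&: Q = Q :&: [set v : 'I_n | v < x] by rewrite setIC.
rewrite e1 e3 in h1'; rewrite e2 in h2.
rewrite eG /Zc -{1}h1 -h1' -h2 -!addnA; exact: addnCA.
Qed.

Lemma Z_lt_zeros Q (x : 'I_n) : x \notin Q -> Zc Q x < n - #|Q|.
Proof.
move=> hx.
have : #|Q| + #|~: Q| = n by rewrite cardsC card_ord.
have : Zc Q x < #|~: Q|.
  apply: proper_card; apply/properP; split.
    by apply/subsetP => i; rewrite !inE; case/andP.
  by exists x; rewrite !inE ?ltnn ?hx.
lia.
Qed.

Definition W (t : nat) (G : nat -> nat) : {set 'I_n} :=
  [set x : 'I_n | [exists v : 'I_(n - t), x + G v == v + t]].

Lemma card_W t G : #|W t G| <= n - t.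
Proof.
case: (posnP n) => [n0|npos].
  by rewrite (leq_trans (max_card _)) // card_ord n0.
pose x0 : 'I_n := Ordinal npos.
apply: (@leq_trans #|[set insubd x0 (v + t - G v) | v : 'I_(n - t)]|); last first.
  by rewrite (leq_trans (leq_imset_card _ _)) // card_ord.
apply: subset_leq_card; apply/subsetP => x; rewrite inE => /existsP [v /eqP hv].
apply/imsetP; exists v => //; apply/val_inj; rewrite val_insubd.
have -> : v + t - G v = x by lia.
by rewrite ltn_ord.
Qed.

Lemma zeros_W Q : ~: Q = W #|Q| (Gf Q).
Proof.
apply/eqP; rewrite eqEcard; apply/andP; split.
  apply/subsetP => x; rewrite inE => hx; rewrite inE; apply/existsP.
  exists (Ordinal (Z_lt_zeros hx)); rewrite /=; apply/eqP; exact: zero_eq.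
rewrite (leq_trans (card_W _ _)) //.
have : #|Q| + #|~: Q| = n by rewrite cardsC card_ord.
lia.
Qed.

Lemma enc_inj m Q1 Q2 : #|Q1| = #|Q2| -> inv Q1 = m -> inv Q2 = m ->
  enc m Q1 = enc m Q2 -> Q1 = Q2.
Proof.
move=> ht h1 h2 he.
have eG : Gf Q1 =1 Gf Q2.
  move=> v; rewrite (G_cnt v h1) (G_cnt v h2) big_mkcond [RHS]big_mkcond !big_ord_recl /=.
  rewrite !add0n; apply: eq_bigr => i _.
  have -> : bump 0 i = i.+1 by rewrite /bump add1n.
  by rewrite -(enc_val _ h1) -(enc_val _ h2) he.
apply: setC_inj; rewrite !zeros_W ht.
by apply/setP => x; rewrite !inE; apply: eq_existsb => v; rewrite eG.
Qed.

Lemma count_S (S : {set {set 'I_n}}) t m :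
  (forall Q, Q \in S -> #|Q| = t /\ inv Q = m) -> #|S| <= partition_number m.
Proof.
move=> hS.
rewrite -(card_in_imset (f := enc m)); last first.
  move=> Q1 Q2 /hS [t1 i1] /hS [t2 i2]; apply: enc_inj => //; congruence.
apply: subset_leq_card; apply/subsetP => f /imsetP [Q /hS [_ hi] ->].
exact: enc_part.
Qed.

End Zeros.

Lemma count_good n K :
  #|[set Q : {set 'I_n} | good K Q]| <=
    n.+1 * \sum_(m < (\sum_(v < K) K %/ v.+1).+1) partition_number m.
Proof.
set N := \sum_(v < K) K %/ v.+1.
have hinv (Q : {set 'I_n}) : good K Q -> inv Q <= N.
  by move=> hg; apply: leq_trans (inv_bound hg) (sum_div_le _ _).
have hcard (Q : {set 'I_n}) : #|Q| <= n by rewrite (leq_trans (max_card _)) // card_ord.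
rewrite -sum1_card.
rewrite (partition_big (fun Q : {set 'I_n} => (inord #|Q|, inord (inv Q)) : 'I_n.+1 * 'I_N.+1) xpredT) //=.
apply: (@leq_trans (\sum_(j : 'I_n.+1 * 'I_N.+1) partition_number j.2)).
  apply: leq_sum => -[t m] _.
  rewrite sum1dep_card -cardsE.
  apply: (count_S (t := t)) => Q; rewrite !inE => /andP [hg /eqP [ht hm]].
  split.
    by rewrite -ht inordK // ltnS.
  by rewrite -hm inordK // ltnS hinv.
rewrite -(pair_bigA _ (fun (_ : 'I_n.+1) (m : 'I_N.+1) => partition_number m)) /= sum_nat_const card_ord.
by [].
Qed.

Lemma kcuts_le_good n (E : rel 'I_n) k (s : {perm 'I_n}) :
  tournament E -> (forall t, 0 < t -> t < n -> cut_size E s t <= k) ->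
  num_kcuts E k <= #|[set Q : {set 'I_n} | good (k + k) Q]|.
Proof.
move=> hT hs.
have inj : injective (fun X : {set 'I_n} => [set i | s i \in X]).
  move=> X1 X2 he; apply/setP => y.
  by move/setP: he => /(_ ((s^-1)%g y)); rewrite !inE permKV.
rewrite /num_kcuts -(card_imset _ inj); apply: subset_leq_card.
apply/subsetP => Q /imsetP [X]; rewrite inE => hX ->.
rewrite inE; exact: (cut_lemma hT hs hX).
Qed.

Local Open Scope R_scope.

Lemma exp_mono x y : x <= y -> exp x <= exp y.
Proof. intros [h|h]; [left; apply exp_increasing; exact h| subst; lra]. Qed.

Lemma ln_le_sub1 y : 0 < y -> ln y <= y - 1.
Proof. intros hy. pose proof (exp_ineq1_le (ln y)). rewrite exp_ln in H; lra. Qed.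

Lemma exp_sq y : exp (2 * y) = exp y * exp y.
Proof. replace (2 * y) with (y + y) by ring. apply exp_plus. Qed.

Lemma poly8 y : 0 <= y ->
  1 + 8*y*(8*y) <= ((1+y)*(1+y)*((1+y)*(1+y)))*((1+y)*(1+y)*((1+y)*(1+y))).
Proof.
intros hy.
assert (hy1 : 0 <= y * ((y - 9/28) * (y - 9/28))) by (apply Rmult_le_pos; [lra| pose proof (Rle_0_sqr (y - 9/28)) as hq; unfold Rsqr in hq; exact hq]).
assert (hy2 : 0 <= y*y) by (apply Rmult_le_pos; lra).
assert (hy3 : 0 <= y*y*y) by (apply Rmult_le_pos; lra).
assert (hy4 : 0 <= y*y*y*y) by (apply Rmult_le_pos; lra).
assert (hy5 : 0 <= y*y*y*y*y) by (apply Rmult_le_pos; lra).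
assert (hy6 : 0 <= y*y*y*y*y*y) by (apply Rmult_le_pos; lra).
assert (hy7 : 0 <= y*y*y*y*y*y*y) by (apply Rmult_le_pos; lra).
assert (hy8 : 0 <= y*y*y*y*y*y*y*y) by (apply Rmult_le_pos; lra).
nra.
Qed.

Lemma exp_ge_sq x : 0 <= x -> 1 + x * x <= exp x.
Proof.
intros hx.
assert (e : exp x = ((exp (x/8) * exp (x/8)) * (exp (x/8) * exp (x/8))) *
                    ((exp (x/8) * exp (x/8)) * (exp (x/8) * exp (x/8)))).
{ rewrite <- !exp_sq. f_equal. field. }
rewrite e.
pose proof (exp_ineq1_le (x/8)) as h.
set (z := exp (x/8)) in *. set (w := 1 + x/8) in *.
assert (hw : 1 <= w) by (unfold w; lra).
assert (h2 : w * w <= z * z) by nra.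
assert (h4 : (w*w)*(w*w) <= (z*z)*(z*z)) by nra.
assert (h8 : ((w*w)*(w*w))*((w*w)*(w*w)) <= ((z*z)*(z*z))*((z*z)*(z*z))) by nra.
apply Rle_trans with (2 := h8).
unfold w. replace (1 + x * x) with (1 + 8*(x/8)*(8*(x/8))) by field.
apply poly8; lra.
Qed.

Fixpoint H (j : nat) : R := match j with 0%nat => 0 | S j' => H j' + / INR (S j') end.

Lemma H_le_ln j : (1 <= j)%nat -> H j <= 1 + ln (INR j).
Proof.
induction j as [|j IH]; intros hj; [lia|].
destruct j as [|j].
- simpl. rewrite ln_1. lra.
- assert (IH' := IH ltac:(lia)).
  change (H (S (S j))) with (H (S j) + / INR (S (S j))).
  set (a := INR (S j)) in *. set (b := INR (S (S j))).
  assert (ha : 0 < a) by (unfold a; apply lt_0_INR; lia).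
  assert (hb : b = a + 1) by (unfold a, b; rewrite (S_INR (S j)); ring).
  assert (hl : ln (a / b) <= a / b - 1) by (apply ln_le_sub1; rewrite hb; apply Rdiv_lt_0_compat; lra).
  unfold Rdiv in hl.
  assert (hm : ln (a * / b) = ln a + ln (/ b)) by (apply ln_mult; [lra| apply Rinv_0_lt_compat; lra]).
  assert (hi : ln (/ b) = - ln b) by (apply ln_Rinv; lra).
  rewrite hm hi in hl.
  assert (e : a * / b - 1 = - / b) by (rewrite hb; field; lra).
  rewrite e in hl. lra.
Qed.

Lemma Cconst_gt : 1 <= PI * sqrt (2/3) * (sqrt 2 - 1).
Proof.
pose proof PI2_3_2 as hp.
assert (h1 : 0.8164 <= sqrt (2/3)).
{ rewrite -(sqrt_square 0.8164); last lra. apply sqrt_le_1_alt. lra. }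
assert (h2 : 1.4142 <= sqrt 2).
{ rewrite -(sqrt_square 1.4142); last lra. apply sqrt_le_1_alt. lra. }
assert (hpi : 3 <= PI) by lra.
assert (0 <= sqrt 2 - 1 - 0.4142) by lra.
assert (3 * 0.8164 <= PI * sqrt (2/3)) by nra.
nra.
Qed.


Lemma INR_leq (a b : nat) : (a <= b)%N -> INR a <= INR b.
Proof. by move/leP; apply: le_INR. Qed.

Lemma INR_addn (a b : nat) : INR (a + b) = INR a + INR b.
Proof. by rewrite -plusE plus_INR. Qed.

Lemma INR_muln (a b : nat) : INR (a * b) = INR a * INR b.
Proof. by rewrite -multE mult_INR. Qed.

Lemma sumdiv_INR (K J : nat) : INR (\sum_(v < J) K %/ v.+1) <= INR K * H J.
Proof.
elim: J => [|J IH]; first by rewrite big_ord0 /=; lra.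
rewrite big_ord_recr /= INR_addn.
have hd : 0 < INR J.+1 by apply: lt_0_INR; lia.
have h1 : INR (K %/ J.+1) * INR J.+1 <= INR K.
  by rewrite -INR_muln; apply: INR_leq; apply: leq_divM.
have h2 : INR (K %/ J.+1) <= INR K * / INR J.+1.
  apply: (Rmult_le_reg_r (INR J.+1)) => //.
  by rewrite Rmult_assoc Rinv_l; lra.
change (INR (\sum_(i < J) K %/ i.+1) + INR (K %/ J.+1) <= INR K * (H J + / INR J.+1)); nra.
Qed.

Lemma psum_INR (A : R) (N : nat) :
  (forall m : nat,
      (INR (partition_number m) <= A / INR (m + 1) * exp (Cconst * sqrt (INR m)))%R) ->
  0 <= A -> 0 <= Cconst ->
  forall M, (M <= N.+1)%N ->
  INR (\sum_(m < M) partition_number m) <= INR M * (A * exp (Cconst * sqrt (INR N))).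
Proof.
move=> hA hA0 hC; elim=> [|M IH] hM; first by rewrite big_ord0 /=; lra.
have -> : (\sum_(m < M.+1) partition_number m = \sum_(m < M) partition_number m + partition_number M)%N by rewrite big_ord_recr.
rewrite INR_addn S_INR.
have := IH (ltnW hM).
have : INR (partition_number M) <= A * exp (Cconst * sqrt (INR N)).
  apply: Rle_trans (hA M) _.
  have hm1 : 1 <= INR (M + 1) by rewrite INR_addn; have := pos_INR M; simpl; lra.
  have hexp : exp (Cconst * sqrt (INR M)) <= exp (Cconst * sqrt (INR N)).
    apply: exp_mono; apply: Rmult_le_compat_l => //; apply: sqrt_le_1_alt.
    by apply: INR_leq; rewrite -ltnS.
  have hdiv : A / INR (M + 1) <= A.
    rewrite /Rdiv; rewrite -{2}(Rmult_1_r A); apply: Rmult_le_compat_l => //.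
    rewrite -Rinv_1; apply: Rinv_le_contravar; lra.
  have hpos : 0 <= A / INR (M + 1).
    by apply: Rmult_le_pos => //; left; apply: Rinv_0_lt_compat; lra.
  have := exp_pos (Cconst * sqrt (INR M)).
  nra.
move=> h1 h2; lra.
Qed.

Lemma key_real (k N : nat) : (0 < k)%N ->
  INR N <= 2 * INR k * (1 + ln (2 * INR k)) ->
  INR N.+1 * exp (Cconst * sqrt (INR N)) <=
  exp (2 * Cconst * sqrt (INR k * (1 + ln (2 * INR k)))).
Proof.
move=> hk hN.
have hk1 : 1 <= INR k by apply: (INR_leq hk).
have hC : 0 <= Cconst.
  rewrite /Cconst; apply: Rmult_le_pos; [left; apply: PI_RGT_0 | apply: sqrt_pos].
have hCg := Cconst_gt; rewrite -/Cconst in hCg.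
have hl : 0 <= ln (2 * INR k).
  rewrite -ln_1; left; apply: ln_increasing; lra.
have hN0 := pos_INR N.
set u := sqrt (INR N).
have hu0 : 0 <= u by apply: sqrt_pos.
have huu : u * u = INR N by apply: sqrt_sqrt.
have hs2 : 0 <= sqrt 2 by apply: sqrt_pos.
set x := Cconst * (sqrt 2 - 1) * u.
have hxu : u <= x by rewrite /x; nra.
have hex := exp_ge_sq (Rle_trans _ _ _ hu0 hxu).
have e1 : INR N.+1 = 1 + u * u by rewrite S_INR huu; lra.
have step1 : INR N.+1 * exp (Cconst * u) <= exp (Cconst * sqrt (2 * INR N)).
  rewrite sqrt_mult; [|lra|lra]; rewrite -/u.
  have -> : Cconst * (sqrt 2 * u) = x + Cconst * u by rewrite /x; ring.
  rewrite exp_plus e1.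
  have := exp_pos (Cconst * u).
  move=> hp; apply: Rmult_le_compat_r; [lra|]. have : u * u <= x * x by nra. lra.
apply: Rle_trans step1 _; apply: exp_mono.
have hy : 0 <= INR k * (1 + ln (2 * INR k)) by nra.
have -> : 2 * Cconst * sqrt (INR k * (1 + ln (2 * INR k))) =
          Cconst * (sqrt (2 * 2) * sqrt (INR k * (1 + ln (2 * INR k)))).
  rewrite sqrt_square; [ring|lra].
apply: Rmult_le_compat_l => //.
rewrite -sqrt_mult; [|lra|lra].
apply: sqrt_le_1_alt; nra.
Qed.

Close Scope R_scope.
Unset Implicit Arguments.

Theorem mainTheorem12 (A : R)
  (hA : forall m : nat,
      (INR (partition_number m) <= A / INR (m + 1) * exp (Cconst * sqrt (INR m)))%R)
  (k n : nat) (E : rel 'I_n) :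
  (0 < k)%N -> tournament E -> (cutwidth E <= k)%N ->
  (INR (num_kcuts E k)
     <= A * exp (2 * Cconst * sqrt (INR k * (1 + ln (2 * INR k)))) * INR (n + 1))%R.
Proof.
move=> hk hT hcw.
have [s hs] := exists_perm hcw.
set K := (k + k)%N.
set N := (\sum_(v < K) K %/ v.+1)%N.
have hc : (num_kcuts E k <= n.+1 * \sum_(m < N.+1) partition_number m)%N.
  exact: leq_trans (kcuts_le_good hT hs) (count_good n K).
have hp0 : (0 < partition_number 0)%N.
  apply/card_gt0P; exists [ffun i : 'I_0 => (ord0 : 'I_1)]; by rewrite inE big_ord0.
have hA0 : (0 <= A)%R.
  move: (hA 0%N); rewrite /= sqrt_0 Rmult_0_r exp_0 Rmult_1_r.
  have := INR_leq hp0; rewrite /= => h1 h2.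
  rewrite /Rdiv Rinv_1 Rmult_1_r in h2; lra.
have hC : (0 <= Cconst)%R.
  rewrite /Cconst; apply: Rmult_le_pos; [left; apply: PI_RGT_0 | apply: sqrt_pos].
have hN : (INR N <= 2 * INR k * (1 + ln (2 * INR k)))%R.
  have h1 := sumdiv_INR K K.
  have hK1 : (1 <= K)%N by rewrite /K; lia.
  have h2 := H_le_ln hK1.
  have eK : INR K = (2 * INR k)%R by rewrite /K INR_addn; ring.
  rewrite eK in h1 h2.
  have := pos_INR k.
  rewrite -/N in h1; nra.
have hkey := key_real hk hN.
have hsum := psum_INR hA hA0 hC (leqnn N.+1).
have hcR := INR_leq hc.
rewrite INR_muln in hcR.
rewrite addn1.
have hn0 := pos_INR n.+1.
set S := INR (\sum_(m < N.+1) partition_number m) in hsum hcR.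
set e := exp (Cconst * sqrt (INR N)) in hsum hkey.
set F := exp (2 * Cconst * sqrt (INR k * (1 + ln (2 * INR k)))) in hkey *.
have he : (0 <= e)%R by rewrite /e; left; apply: exp_pos.
have : (S <= A * F)%R.
  apply: Rle_trans hsum _.
  have -> : (INR N.+1 * (A * e) = A * (INR N.+1 * e))%R by ring.
  by apply: Rmult_le_compat_l.
move=> hSF; nra.
Qed.
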